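(* The energy $W^+_{\mathrm{magic}}\colon\mathrm{GL}^+(2)\to\mathbb{R}$, \[ W^+_{\mathrm{magic}}(F)=\frac{\lambda_{\max}}{\lambda_{\min}}-\log\!\left(\frac{\lambda_{\max}}{\lambda_{\min}}\right)+\log\det F, \] where $\lambda_{\max}\ge\lambda_{\min}>0$ are the ordered singular values of $F$, is not polyconvex.
   Context: $\mathrm{GL}^+(2)=\{F\in\mathbb{R}^{2\times2}:\det F>0\}$. A function $W\colon\mathrm{GL}^+(2)\to\mathbb{R}$ is polyconvex if its extension $\widehat W\colon\mathbb{R}^{2\times2}\to\mathbb{R}\cup\{+\infty\}$ ($\widehat W=W$ on $\mathrm{GL}^+(2)$, $+\infty$ elsewhere) can be written as $\widehat W(F)=P(F,\det F)$ for all $F\in\mathbb{R}^{2\times2}$ with some convex function $P\colon\mathbb{R}^{2\times2}\times\mathbb{R}\to\mathbb{R}\cup\{+\infty\}$. *)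

(* Defs.v *)
From HB Require Import structures.
From mathcomp Require Import all_boot all_order all_algebra.
From mathcomp Require Import all_classical all_reals.
From mathcomp Require Import exp.
Set Implicit Arguments. Unset Strict Implicit. Unset Printing Implicit Defensive.
Import Order.TTheory GRing.Theory Num.Theory.
Local Open Scope ring_scope.

(* Singular values of a 2x2 real matrix F: the square roots of the two
   eigenvalues of the symmetric positive semidefinite matrix C = F^T F,
   computed from its characteristic polynomial X^2 - tr C X + det C. *)
Definition cauchy_green {R : realType} (F : 'M[R]_2) : 'M[R]_2 := F^T *m F.

Definition eig_max {R : realType} (F : 'M[R]_2) : R :=
  let C := cauchy_green F in
  (\tr C + Num.sqrt (\tr C ^+ 2 - 4 * \det C)) / 2.

Definition eig_min {R : realType} (F : 'M[R]_2) : R :=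
  let C := cauchy_green F in
  (\tr C - Num.sqrt (\tr C ^+ 2 - 4 * \det C)) / 2.

Definition lambda_max {R : realType} (F : 'M[R]_2) : R := Num.sqrt (eig_max F).
Definition lambda_min {R : realType} (F : 'M[R]_2) : R := Num.sqrt (eig_min F).

Definition W_magic {R : realType} (F : 'M[R]_2) : R :=
  lambda_max F / lambda_min F - ln (lambda_max F / lambda_min F) + ln (\det F).

Definition ext_energy {R : realType} (W : 'M[R]_2 -> R) (F : 'M[R]_2) : \bar R :=
  if 0 < \det F then (W F)%:E else +oo%E.

Definition convex_ext {R : realType} (P : 'M[R]_2 -> R -> \bar R) : Prop :=
  (forall F d, P F d != -oo%E) /\
  forall (F1 F2 : 'M[R]_2) (d1 d2 t : R), 0 < t < 1 ->
    (P (t *: F1 + (1 - t) *: F2)%R (t * d1 + (1 - t) * d2)%R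
      <= t%:E * P F1 d1 + (1 - t)%:E * P F2 d2)%E.

(* W : GL+(2) -> R (given as a function on all matrices, only its values on
   GL+(2) matter) is polyconvex *)
Definition polyconvex {R : realType} (W : 'M[R]_2 -> R) : Prop :=
  exists P : 'M[R]_2 -> R -> \bar R, convex_ext P /\
    forall F : 'M[R]_2, ext_energy W F = P F (\det F).

(* Main.v *)
Require Import Defs.
From HB Require Import structures.
From mathcomp Require Import all_boot all_order all_algebra.
From mathcomp Require Import all_classical all_reals.
From mathcomp Require Import exp.
From mathcomp Require Import lra ring.
Import Order.TTheory GRing.Theory Num.Theory.
Local Open Scope ring_scope.

Section Aux.
Variable R : realType.

Definition dm (a b : R) : 'M[R]_2 :=
  diag_mx (\row_(j < 2) if j == ord0 then a else b).

Lemma lift00 : (lift ord0 (ord0 : 'I_1) == ord0 :> 'I_2) = false.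
Proof. by []. Qed.

Lemma tr_dm a b : \tr (dm a b) = a + b.
Proof. by rewrite mxtrace_diag big_ord_recl big_ord1 !mxE eqxx lift00. Qed.

Lemma det_dm a b : \det (dm a b) = a * b.
Proof. by rewrite det_diag big_ord_recl big_ord1 !mxE eqxx lift00. Qed.

Lemma cg_dm a b : cauchy_green (dm a b) = dm (a ^+ 2) (b ^+ 2).
Proof.
rewrite /cauchy_green /dm tr_diag_mx mulmx_diag; congr diag_mx.
by apply/rowP => j; rewrite !mxE; case: ifP => _; rewrite expr2.
Qed.

Lemma W_dm_core a b : 0 < a -> 0 < b -> b <= a ->
  lambda_max (dm a b) = a /\ lambda_min (dm a b) = b.
Proof.
move=> a0 b0 ba.
rewrite /lambda_max /lambda_min /eig_max /eig_min cg_dm tr_dm det_dm.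
have -> : (a ^+ 2 + b ^+ 2) ^+ 2 - 4 * (a ^+ 2 * b ^+ 2) = (a ^+ 2 - b ^+ 2) ^+ 2 by ring.
have ab2 : b ^+ 2 <= a ^+ 2 by rewrite lerXn2r // ?nnegrE ltW.
rewrite sqrtr_sqr ger0_norm ?subr_ge0 //.
have -> : (a ^+ 2 + b ^+ 2 + (a ^+ 2 - b ^+ 2)) / 2 = a ^+ 2 by field.
have -> : (a ^+ 2 + b ^+ 2 - (a ^+ 2 - b ^+ 2)) / 2 = b ^+ 2 by field.
by rewrite !sqrtr_sqr !gtr0_norm.
Qed.

Lemma W_dm_core' a b : 0 < a -> 0 < b -> a <= b ->
  lambda_max (dm a b) = b /\ lambda_min (dm a b) = a.
Proof.
move=> a0 b0 ba.
rewrite /lambda_max /lambda_min /eig_max /eig_min cg_dm tr_dm det_dm.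
have -> : (a ^+ 2 + b ^+ 2) ^+ 2 - 4 * (a ^+ 2 * b ^+ 2) = (b ^+ 2 - a ^+ 2) ^+ 2 by ring.
have ab2 : a ^+ 2 <= b ^+ 2 by rewrite lerXn2r // ?nnegrE ltW.
rewrite sqrtr_sqr ger0_norm ?subr_ge0 //.
have -> : (a ^+ 2 + b ^+ 2 + (b ^+ 2 - a ^+ 2)) / 2 = b ^+ 2 by field.
have -> : (a ^+ 2 + b ^+ 2 - (b ^+ 2 - a ^+ 2)) / 2 = a ^+ 2 by field.
by rewrite !sqrtr_sqr !gtr0_norm.
Qed.

Lemma ln_lb (x : R) : 0 < x -> 1 - x^-1 <= ln x.
Proof.
move=> x0.
have xi : 0 < x^-1 by rewrite invr_gt0.
have h : -1 < x^-1 - 1 by lra.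
have := @le_ln1Dx R (x^-1 - 1) h.
rewrite addrCA subrr addr0 lnV ?posrE //.
lra.
Qed.

Lemma ln_ub (x : R) : 0 < x -> ln x <= x - 1.
Proof.
move=> x0; have := @le_ln1Dx R (x - 1).
rewrite addrCA subrr addr0; apply; lra.
Qed.

End Aux.
Arguments dm {R}.

Theorem lemma4p3 (R : realType) : ~ polyconvex (@W_magic R).
Proof.
move=> [P [[_ Pc] HP]].
have E F : 0 < \det F -> P F (\det F) = (W_magic F)%:E.
  by move=> hF; rewrite -HP /ext_energy hF.
pose h : R := 2^-1.
have h2 : h * 2 = 1 by rewrite /h mulVf // pnatr_eq0.
have h0 : 0 < h by rewrite /h invr_gt0.
pose e : R := h ^+ 3.
have e8 : e * 8 = 1.
  have -> : (8 : R) = 2 ^+ 3 by rewrite !exprS expr0; lra.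
  by rewrite /e -exprMn h2 expr1n.
have e0 : 0 < e by rewrite /e exprn_gt0.
have ee : e * e * 64 = 1.
  have -> : (64 : R) = 8 * 8 by lra.
  by rewrite mulrACA e8 mulr1.
pose F1 := dm e e. pose F2 := dm (8 : R) 1. pose F3 := dm (1 : R) 8.
pose F0 := dm (17 / 10 : R) (17 / 10).
have W2 : W_magic F2 = 8.
  rewrite /F2 /W_magic; have [-> ->] := @W_dm_core R 8 1 ltac:(lra) ltac:(lra) ltac:(lra).
  by rewrite /W_magic det_dm divr1 mulr1 subrK.
have W3 : W_magic F3 = 8.
  rewrite /F3 /W_magic; have [-> ->] := @W_dm_core' R 1 8 ltac:(lra) ltac:(lra) ltac:(lra).
  by rewrite /W_magic det_dm divr1 mul1r subrK.
have W1 : W_magic F1 = 1 + ln (e * e).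
  rewrite /F1 /W_magic; have [-> ->] := @W_dm_core R e e e0 e0 (lexx e).
  by rewrite /W_magic det_dm divff ?gt_eqF // ln1 subr0.
have x00 : (0 : R) < 17 / 10 by lra.
have W0 : W_magic F0 = 1 + ln (17 / 10 * (17 / 10)).
  rewrite /F0 /W_magic; have [-> ->] := @W_dm_core R (17/10) (17/10) x00 x00 (lexx _).
  by rewrite /W_magic det_dm divff ?gt_eqF // ln1 subr0.
have s1 := Pc F2 F3 (\det F2) (\det F3) (1/2) ltac:(apply/andP; split; lra).
have p2 : 0 < \det F2 by rewrite det_dm; lra.
have p3 : 0 < \det F3 by rewrite det_dm; lra.
rewrite (E F2 p2) (E F3 p3) W2 W3 in s1.
rewrite -!EFinM -EFinD in s1.
pose G := 1 / 2 *: F2 + (1 - 1 / 2) *: F3.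
pose dG : R := 1 / 2 * \det F2 + (1 - 1 / 2) * \det F3.
have s2 := Pc F1 G (\det F1) dG (16/25) ltac:(apply/andP; split; lra).
have M : 16 / 25 *: F1 + (1 - 16 / 25) *: G = F0.
  apply/matrixP => i j; rewrite !mxE.
  case: (i == j); case: (i == ord0); rewrite ?mulr1n ?mulr0n; lra.
have D : 16 / 25 * \det F1 + (1 - 16 / 25) * dG = \det F0.
  rewrite /dG !det_dm; lra.
have p0 : 0 < \det F0 by rewrite det_dm; nra.
have p1 : 0 < \det F1 by rewrite det_dm; nra.
rewrite M D (E F0 p0) (E F1 p1) W0 W1 in s2.
have s3 : ((1 - 16 / 25)%:E * P G dG <= (1 - 16 / 25)%:E * (1 / 2 * 8 + (1 - 1 / 2) * 8)%:E)%E.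
  by apply: lee_wpmul2l ; [rewrite lee_fin; lra | exact: s1].
have := le_trans s2 (leeD2l _ s3).
rewrite -!EFinM -EFinD lee_fin.
have lnh := @ln_ub R h h0.
have lnx := @ln_lb R (17 / 10 * (17 / 10)) ltac:(nra).
have ee6 : e * e = h ^+ 6 by rewrite /e -exprD.
have lnh6 : ln (h ^+ 6) = ln h * 6 by rewrite lnXn // mulr_natr.
rewrite ee6 lnh6.
have xi : (17 / 10 * (17 / 10))^-1 * (17 / 10 * (17 / 10)) = 1 :> R.
  by rewrite mulVf //; nra.
move: lnx xi; set xinv := (_ ^-1).
lra.
Qed.
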